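(* Membership queries for $k$-safety hyperproperties are, in general, undecidable: there exist $k$, a finite alphabet $\Sigma$ and a $k$-safety hyperproperty $\mathbf{S}$ over $\Sigma$ such that it is undecidable, given a finite set $T \subseteq \Sigma^*$ of finite traces, whether $T \in \mathrm{Bad}(\mathbf{S})$.
   Context: For finite $T \subseteq \Sigma^*$ and $T' \subseteq \Sigma^\omega$, $T \le T'$ means every $t \in T$ is a prefix of some $t' \in T'$. A hyperproperty is a set $\mathbf{S} \subseteq \mathcal{P}(\Sigma^\omega)$; $\mathrm{Bad}(\mathbf{S}) = \{T \subseteq \Sigma^* \text{ finite} \mid \forall T' \subseteq \Sigma^\omega.\ T \le T' \Rightarrow T' \notin \mathbf{S}\}$. $\mathbf{S}$ is a $k$-safety hyperproperty if every $T' \subseteq \Sigma^\omega$ with $T' \notin \mathbf{S}$ has some $T \in \mathrm{Bad}(\mathbf{S})$ with $|T| \le k$ and $T \le T'$. *)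

(* Defs.v *)
From Stdlib Require List.
From mathcomp Require Import all_boot.
Set Implicit Arguments. Unset Strict Implicit. Unset Printing Implicit Defensive.

Definition itrace (Sigma : Type) := nat -> Sigma.

Definition is_prefix (Sigma : Type) (t : seq Sigma) (t' : itrace Sigma) : Prop :=
  forall i (x0 : Sigma), i < size t -> nth x0 t i = t' i.

Definition hyperprop (Sigma : Type) := (itrace Sigma -> Prop) -> Prop.

(* Finite sets T of finite traces are represented by lists (membership =
   list membership; duplicates/order irrelevant). *)
Definition trace_le (Sigma : eqType) (T : seq (seq Sigma)) (T' : itrace Sigma -> Prop) : Prop :=
  forall t, t \in T -> exists t', T' t' /\ is_prefix t t'.

Definition Bad (Sigma : eqType) (S : hyperprop Sigma) (T : seq (seq Sigma)) : Prop :=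
  forall T' : itrace Sigma -> Prop, trace_le T T' -> ~ S T'.

Definition card_traces (Sigma : eqType) (T : seq (seq Sigma)) : nat := size (undup T).

Definition k_safety (Sigma : eqType) (k : nat) (S : hyperprop Sigma) : Prop :=
  forall T' : itrace Sigma -> Prop, ~ S T' ->
    exists T : seq (seq Sigma), Bad S T /\ card_traces T <= k /\ trace_le T T'.

Inductive prog : Type :=
| PZero : prog
| PSucc : prog
| PProj : nat -> prog
| PComp : prog -> list prog -> prog
| PRec  : prog -> prog -> prog
| PMu   : prog -> prog.

Inductive eval : prog -> seq nat -> nat -> Prop :=
| eval_zero v : eval PZero v 0
| eval_succ v : eval PSucc v (head 0 v).+1
| eval_proj i v : eval (PProj i) v (nth 0 v i)
| eval_comp f gs v ys y :
    List.Forall2 (fun g r => eval g v r) gs ys -> eval f ys y -> eval (PComp f gs) v y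
| eval_rec0 f g w y : eval f w y -> eval (PRec f g) (0 :: w) y
| eval_recS f g n w z y :
    eval (PRec f g) (n :: w) z -> eval g (n :: z :: w) y -> eval (PRec f g) (n.+1 :: w) y
| eval_mu f v n :
    eval f (n :: v) 0 ->
    (forall m, m < n -> exists y, eval f (m :: v) y.+1) ->
    eval (PMu f) v n.

Definition cpair (a b : nat) : nat := (a + b) * (a + b).+1 %/ 2 + b.

Fixpoint enc_list (A : Type) (e : A -> nat) (l : seq A) : nat :=
  match l with
  | [::] => 0
  | x :: l' => (cpair (e x) (enc_list e l')).+1
  end.

Definition enc_letter (Sigma : finType) (a : Sigma) : nat := enum_rank a.

Definition enc_traces (Sigma : finType) (T : seq (seq Sigma)) : nat :=
  enc_list (enc_list (@enc_letter Sigma)) T.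

Definition decidable_traces (Sigma : finType) (P : seq (seq Sigma) -> Prop) : Prop :=
  exists p : prog, forall T : seq (seq Sigma),
    (P T -> eval p [:: enc_traces T] 1) /\ (~ P T -> eval p [:: enc_traces T] 0).

(* Main.v *)
Require Import Defs.
From mathcomp Require Import all_boot.
From Stdlib Require Import Classical.
Fixpoint eval_det p v y (H : eval p v y) {struct H} : forall y', eval p v y' -> y = y'.
Proof.
destruct H as [v|v|i v|f gs v ys y Hs Hf|f g w y Hf|f g n w z y Hr Hg|f v n H0 Hlt]; intros y' H'.
- by inversion H'.
- by inversion H'.
- by inversion H'.
- inversion H' as [| | |f1 gs1 v1 ys1 y1 Hs1 Hf1| | |]; subst.
  have E : ys = ys1.
  { clear -Hs Hs1 eval_det.
    revert ys1 Hs1. induction Hs as [|g r gs' rs' Hgr Hrest IH]; intros ys1 Hs1; inversion Hs1; subst; first done.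
    f_equal; [exact: (eval_det _ _ _ Hgr) | exact: IH]. }
  subst; exact: (eval_det _ _ _ Hf).
- inversion H' as [| | | |f1 g1 w1 y1 Hf1| |]; subst. exact: (eval_det _ _ _ Hf).
- inversion H' as [| | | | |f1 g1 n1 w1 z1 y1 Hr1 Hg1|]; subst. have := eval_det _ _ _ Hr _ Hr1. move=> ?; subst. exact: (eval_det _ _ _ Hg).
- inversion H' as [| | | | | |f1 v1 n1 H01 Hlt1]; subst.
  case: (ltngtP n y') => // Hc.
  + case: (Hlt1 n Hc) => y0 Hy0. by have := eval_det _ _ _ H0 _ Hy0.
  + case: (Hlt y' Hc) => y0 Hy0. by have := eval_det _ _ _ Hy0 _ H01.
Qed.
Fixpoint to_tree (p : prog) : GenTree.tree nat :=
  match p with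
  | PZero => GenTree.Node 0 [::]
  | PSucc => GenTree.Node 1 [::]
  | PProj i => GenTree.Node 2 [:: GenTree.Leaf i]
  | PComp f gs => GenTree.Node 3 (to_tree f :: map to_tree gs)
  | PRec f g => GenTree.Node 4 [:: to_tree f; to_tree g]
  | PMu f => GenTree.Node 5 [:: to_tree f]
  end.
Fixpoint to_tree_inj p : forall q, to_tree p = to_tree q -> p = q.
Proof.
intros q. destruct p as [ | | i | f gs | f g | f ]; destruct q as [ | | i' | f' gs' | f' g' | f' ]; simpl; intro E; try discriminate.
all: try reflexivity.
- by case: E => ->.
- case: E => /to_tree_inj -> E; congr PComp.
  clear f'. revert gs' E. induction gs as [|g gs IH]; intros [|g' gs'] E; try discriminate; first done.
  simpl in E. case: E => /to_tree_inj -> /IH -> //.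
- by case: E => /to_tree_inj -> /to_tree_inj ->.
- by case: E => /to_tree_inj ->.
Qed.

Definition code (n : nat) : seq bool := rcons (nseq n true) false.
Definition cp (p : prog) : seq bool := code (pickle (to_tree p)).
Definition Xs (t : seq bool) : Prop :=
  exists p, t = cp p /\ ~ eval p [:: enc_traces [:: t]] 1.
Definition Sh : hyperprop bool :=
  fun T' => forall t', T' t' -> forall t, Xs t -> ~ is_prefix t t'.

Lemma code_inj m n : code m = code n -> m = n.
Proof. by move=> /(congr1 size); rewrite !size_rcons !size_nseq => -[]. Qed.

Lemma nth_code x0 m i : i <= m -> nth x0 (code m) i = (i < m).
Proof.
move=> Hi; rewrite /code nth_rcons size_nseq.
case: (ltngtP i m) => [Hlt|Hgt|E].
- by rewrite nth_nseq Hlt.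
- by move: (leq_trans Hgt Hi); rewrite ltnn.
- by [].
Qed.

Lemma prefix_code m n : is_prefix (code m) (fun i => i < n) -> m = n.
Proof.
move=> H.
have sz : size (code m) = m.+1 by rewrite size_rcons size_nseq.
have Hm := H m false; rewrite sz ltnSn nth_code // ltnn in Hm.
have Hm' := esym (Hm isT).
case: (ltngtP m n) => // Hnm; first by rewrite Hnm in Hm'.
have Hn := H n false; rewrite sz ltnS (ltnW Hnm) nth_code ?(ltnW Hnm) // Hnm ltnn in Hn.
by have := Hn isT.
Qed.

Lemma X_Bad t : Xs t -> Bad Sh [:: t].
Proof.
move=> Xt T' Hle HS.
have [t' [Ht' Hp]] := Hle t (mem_head _ _).
exact: (HS t' Ht' t Xt Hp).
Qed.

Lemma Bad_X n : Bad Sh [:: code n] -> Xs (code n).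
Proof.
move=> HB; apply: NNPP => nX.
apply: (HB (fun t' => t' = (fun i => i < n))).
- move=> t; rewrite mem_seq1 => /eqP ->; exists (fun i => i < n); split => //.
  move=> i x0; rewrite size_rcons size_nseq ltnS => Hi; exact: nth_code.
- move=> t' -> t [p [Et Hp]] Hpre.
  apply: nX. have Et' : t = code (pickle (to_tree p)) by [].
  rewrite Et' in Hpre. have E := @prefix_code _ _ Hpre.
  by exists p; rewrite -E -Et' -Et.
Qed.

Lemma cp_inj p q : cp p = cp q -> p = q.
Proof. by move=> /code_inj /(pcan_inj pickleK) /to_tree_inj. Qed.

Theorem corollary3 :
  exists (k : nat) (Sigma : finType) (S : hyperprop Sigma),
    k_safety k S /\ ~ decidable_traces (fun T => Bad S T).
Proof.
exists 1, bool, Sh; split.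
- move=> T' nS; apply: NNPP => H; apply: nS => t' Ht' t Xt Hp; apply: H.
  exists [:: t]; split; first exact: X_Bad.
  split; first by [].
  move=> t0; rewrite mem_seq1 => /eqP ->; by exists t'.
- move=> [p Hp].
  have [HB HN] := Hp [:: cp p].
  have nB : ~ Bad Sh [:: cp p].
    move=> B; have := @Bad_X _ B => -[q [/cp_inj Eq Hq]]; subst q.
    exact: Hq (HB B).
  have E0 := HN nB.
  apply: nB; apply: X_Bad; exists p; split => // E1.
  by have := @eval_det _ _ _ E0 _ E1.
Qed.
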